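(* Identify the tangent space of $\mathbb OP^2$ at $P_0=[1,0,0]$ with $\mathbb O^2$ via the chart $[1,u,v]\mapsto(u,v)$, a pair $(a,b)$ corresponding to the tangent vector with $du=a$, $dv=b$. Then the Riemann curvature tensor of $(\mathbb OP^2,g)$ at $P_0$ is $$\begin{aligned}R\big((a,b),(c,d),(e,f),(g,h)\big)=&\,4\langle a,e\rangle\langle c,g\rangle-4\langle c,e\rangle\langle a,g\rangle+4\langle b,f\rangle\langle d,h\rangle-4\langle d,f\rangle\langle b,h\rangle\\&-\langle e\bar d,g\bar b\rangle+\langle e\bar b,g\bar d\rangle-\langle c\bar f,a\bar h\rangle+\langle a\bar f,c\bar h\rangle-\langle a\bar d-c\bar b,\ g\bar f-e\bar h\rangle.\end{aligned}$$
   Context: Octonions: $\mathbb O=\mathbb H\oplus\mathbb H$ with product $(q_1,q_2)(p_1,p_2)=(q_1p_1-\bar p_2q_2,\ p_2q_1+q_2\bar p_1)$, conjugation $\overline{(q_1,q_2)}=(\bar q_1,-q_2)$, $\langle a,b\rangle=\mathrm{Re}(a\bar b)$, $|a|^2=\langle a,a\rangle$. $\mathbb OP^2=\mathcal U/_\sim$ with $\mathcal U=(\{1\}\times\mathbb O^2)\cup(\mathbb O\times\{1\}\times\mathbb O)\cup(\mathbb O^2\times\{1\})$ and $[a,b,c]\sim[d,e,f]$ iff $(a,b,c)=(d\lambda,e\lambda,f\lambda)$ for some $\lambda\ne0$; charts $[1,u,v]\mapsto(u,v)$, $[u,1,v]\mapsto(u,v)$, $[u,v,1]\mapsto(u,v)$,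 and metric $g$ given on each chart, for tangent vector $(du,dv)=(\xi,\eta)$, by $ds^2=\frac{|\xi|^2(1+|v|^2)+|\eta|^2(1+|u|^2)-2\mathrm{Re}[(u\bar v)(\eta\bar\xi)]}{(1+|u|^2+|v|^2)^2}$. Curvature sign convention: in coordinates in which the first derivatives of the metric vanish at the point, $R_{\alpha\beta\gamma\delta}=\tfrac12\big[\partial_\alpha\partial_\delta g_{\beta\gamma}+\partial_\beta\partial_\gamma g_{\alpha\delta}-\partial_\beta\partial_\delta g_{\alpha\gamma}-\partial_\alpha\partial_\gamma g_{\beta\delta}\big]$ (so the sectional curvature of an orthonormal pair $x,y$ is $R(x,y,x,y)$). *)

(* Defs.v *)
From Stdlib Require Import Reals.
From Coquelicot Require Import Coquelicot.
Open Scope R_scope.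

Record quat := Quat { q0 : R; q1 : R; q2 : R; q3 : R }.

Definition qadd (a b : quat) : quat :=
  Quat (q0 a + q0 b) (q1 a + q1 b) (q2 a + q2 b) (q3 a + q3 b).
Definition qopp (a : quat) : quat := Quat (- q0 a) (- q1 a) (- q2 a) (- q3 a).
Definition qsub (a b : quat) : quat := qadd a (qopp b).
Definition qscal (s : R) (a : quat) : quat :=
  Quat (s * q0 a) (s * q1 a) (s * q2 a) (s * q3 a).
Definition qconj (a : quat) : quat := Quat (q0 a) (- q1 a) (- q2 a) (- q3 a).
(** Hamilton product (i^2 = j^2 = k^2 = ijk = -1) *)
Definition qmul (a b : quat) : quat :=
  Quat (q0 a * q0 b - q1 a * q1 b - q2 a * q2 b - q3 a * q3 b)
       (q0 a * q1 b + q1 a * q0 b + q2 a * q3 b - q3 a * q2 b)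
       (q0 a * q2 b - q1 a * q3 b + q2 a * q0 b + q3 a * q1 b)
       (q0 a * q3 b + q1 a * q2 b - q2 a * q1 b + q3 a * q0 b).
Definition qzero : quat := Quat 0 0 0 0.

Record oct := Oct { o1 : quat; o2 : quat }.

Definition oadd (x y : oct) : oct := Oct (qadd (o1 x) (o1 y)) (qadd (o2 x) (o2 y)).
Definition osub (x y : oct) : oct := Oct (qsub (o1 x) (o1 y)) (qsub (o2 x) (o2 y)).
Definition oscal (s : R) (x : oct) : oct := Oct (qscal s (o1 x)) (qscal s (o2 x)).
Definition ozero : oct := Oct qzero qzero.
Definition omul (x y : oct) : oct :=
  Oct (qsub (qmul (o1 x) (o1 y)) (qmul (qconj (o2 y)) (o2 x)))
      (qadd (qmul (o2 y) (o1 x)) (qmul (o2 x) (qconj (o1 y)))).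
Definition oconj (x : oct) : oct := Oct (qconj (o1 x)) (qopp (o2 x)).
Definition ore (x : oct) : R := q0 (o1 x).
Definition oinner (a b : oct) : R := ore (omul a (oconj b)).
Definition onorm2 (a : oct) : R := oinner a a.

(** Points of the chart [1,u,v] -> (u,v) and tangent vectors (du,dv), both in O^2 *)
Definition O2 := (oct * oct)%type.
Definition o2add (x y : O2) : O2 := (oadd (fst x) (fst y), oadd (snd x) (snd y)).
Definition o2sub (x y : O2) : O2 := (osub (fst x) (fst y), osub (snd x) (snd y)).
Definition o2scal (s : R) (x : O2) : O2 := (oscal s (fst x), oscal s (snd x)).
Definition o2zero : O2 := (ozero, ozero).

Definition ds2 (p : O2) (X : O2) : R :=
  let u := fst p in let v := snd p in let xi := fst X in let eta := snd X in
  (onorm2 xi * (1 + onorm2 v) + onorm2 eta * (1 + onorm2 u)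
     - 2 * ore (omul (omul u (oconj v)) (omul eta (oconj xi))))
  / (1 + onorm2 u + onorm2 v) ^ 2.

Definition gmet (p : O2) (X Y : O2) : R :=
  (ds2 p (o2add X Y) - ds2 p (o2sub X Y)) / 4.

(** Second directional derivative at the base point P0 = (0,0) of a function
    of the chart point: D2 F X W = d/ds d/dt F(s X + t W) at s = t = 0,
    i.e. X^alpha W^delta d_alpha d_delta F(0). *)
Definition D2 (F : O2 -> R) (X W : O2) : R :=
  Derive (fun s => Derive (fun t => F (o2add (o2scal s X) (o2scal t W))) 0) 0.

(** Riemann tensor at P0 by the convention of the paper (valid in coordinates
    where the first derivatives of the metric vanish at P0):
    R_{abcd} = 1/2 [d_a d_d g_bc + d_b d_c g_ad - d_b d_d g_ac - d_a d_c g_bd],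
    contracted with X^a Y^b Z^c W^d. *)
Definition curvR (X Y Z W : O2) : R :=
  / 2 * ( D2 (fun p => gmet p Y Z) X W
        + D2 (fun p => gmet p X W) Y Z
        - D2 (fun p => gmet p X Z) Y W
        - D2 (fun p => gmet p Y W) X Z ).

(* Main.v *)
Require Import Defs.
From Stdlib Require Import Reals Lra Psatz.
From Coquelicot Require Import Coquelicot.
Open Scope R_scope.

Ltac doct x := let a0 := fresh "r" in let a1 := fresh "r" in let a2 := fresh "r" in
  let a3 := fresh "r" in let a4 := fresh "r" in let a5 := fresh "r" in
  let a6 := fresh "r" in let a7 := fresh "r" in
  destruct x as [[a0 a1 a2 a3] [a4 a5 a6 a7]].
Ltac uf := cbv beta iota zeta delta [onorm2 oinner ore omul oconj osub oadd oscal qscal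
  qsub qadd qmul qconj qopp fst snd o1 o2 q0 q1 q2 q3].

Definition g0 (Y Z : O2) : R := oinner (fst Y) (fst Z) + oinner (snd Y) (snd Z).
Definition Kof (Y Z : O2) : oct :=
  oadd (omul (snd Y) (oconj (fst Z))) (omul (snd Z) (oconj (fst Y))).
Definition Bf2 (Y Z X W : O2) : R :=
  2 * oinner (fst Y) (fst Z) * oinner (snd X) (snd W)
  + 2 * oinner (snd Y) (snd Z) * oinner (fst X) (fst W)
  - ore (omul (oadd (omul (fst X) (oconj (snd W))) (omul (fst W) (oconj (snd X)))) (Kof Y Z)).

Lemma rat_D2 c0 a b c al be ga : 0 <= al ->
 Derive (fun s => Derive (fun t => (c0 + a*s^2 + b*s*t + c*t^2)/(1+al*s^2+2*be*s*t+ga*t^2)^2) 0) 0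
   = b - 4*c0*be.
Proof.
 intro Hal.
 assert (Hin: forall s, Derive (fun t => (c0 + a*s^2 + b*s*t + c*t^2)/(1+al*s^2+2*be*s*t+ga*t^2)^2) 0
     = b*s/(1+al*s^2)^2 - 4*be*s*(c0+a*s^2)/(1+al*s^2)^3).
 { intro s. apply is_derive_unique. assert (Hp: 0 < 1+al*s^2) by nra.
   auto_derive.
   - intro H0. nra.
   - field. lra. }
 rewrite (Derive_ext _ _ _ Hin). apply is_derive_unique.
 auto_derive.
 - split; [|split; auto]; simpl; lra.
 - field.
Qed.

Lemma onorm2_ge0 x : 0 <= onorm2 x.
Proof. doct x; uf. nra. Qed.

Lemma L1 x y : onorm2 (oadd x y) - onorm2 (osub x y) = 4 * oinner x y.
Proof. doct x; doct y; uf; ring. Qed.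

Lemma L2 M y1 y2 z1 z2 :
  ore (omul M (omul (oadd y2 z2) (oconj (oadd y1 z1))))
  - ore (omul M (omul (osub y2 z2) (oconj (osub y1 z1))))
  = 2 * ore (omul M (Kof (y1,y2) (z1,z2))).
Proof. unfold Kof; doct M; doct y1; doct y2; doct z1; doct z2; uf; ring. Qed.

Lemma L3 A B K : ore (omul (oadd A B) K) = ore (omul A K) + ore (omul B K).
Proof. doct A; doct B; doct K; uf; ring. Qed.

Lemma L3r A B K : ore (omul K (oadd A B)) = ore (omul K A) + ore (omul K B).
Proof. doct A; doct B; doct K; uf; ring. Qed.

Lemma L4 s t x w x' w' :
  oinner (oadd (oscal s x) (oscal t w)) (oadd (oscal s x') (oscal t w'))
  = s*s*oinner x x' + s*t*oinner x w' + t*s*oinner w x' + t*t*oinner w w'.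
Proof. doct x; doct w; doct x'; doct w'; uf; ring. Qed.

Lemma L4' t x x' : oinner (oscal t x) (oscal t x') = t*t*oinner x x'.
Proof. doct x; doct x'; uf; ring. Qed.

Lemma L5 x y : oinner x y = oinner y x.
Proof. doct x; doct y; uf; ring. Qed.

Lemma L6 s t x w x' w' K :
  ore (omul (omul (oadd (oscal s x) (oscal t w)) (oconj (oadd (oscal s x') (oscal t w')))) K)
  = s*s*ore (omul (omul x (oconj x')) K) + s*t*ore (omul (omul x (oconj w')) K)
    + t*s*ore (omul (omul w (oconj x')) K) + t*t*ore (omul (omul w (oconj w')) K).
Proof. doct x; doct w; doct x'; doct w'; doct K; uf; ring. Qed.

Lemma L6' t x x' K :
  ore (omul (omul (oscal t x) (oconj (oscal t x'))) K) = t*t*ore (omul (omul x (oconj x')) K).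
Proof. doct x; doct x'; doct K; uf; ring. Qed.

Lemma L7 x y z w : oinner (osub x y) (osub z w) = oinner x z - oinner x w - oinner y z + oinner y w.
Proof. doct x; doct y; doct z; doct w; uf; ring. Qed.

Lemma I1 x y z w : 4*oinner x z*oinner y w - ore(omul (omul x (oconj w)) (omul y (oconj z)))
  - ore(omul (omul z (oconj y)) (omul w (oconj x))) = 2*oinner (omul x (oconj y)) (omul z (oconj w)).
Proof. doct x; doct y; doct z; doct w; uf; ring. Qed.

Lemma I2 x y z w : - ore(omul (omul x (oconj w)) (omul z (oconj y)))
  - ore(omul (omul y (oconj z)) (omul w (oconj x)))
  + ore(omul (omul y (oconj w)) (omul z (oconj x)))
  + ore(omul (omul x (oconj z)) (omul w (oconj y)))
  = -2*oinner (omul y (oconj z)) (omul x (oconj w)) + 2*oinner (omul y (oconj w)) (omul x (oconj z)).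
Proof. doct x; doct y; doct z; doct w; uf; ring. Qed.

Definition Dn (p : O2) : R := 1 + onorm2 (fst p) + onorm2 (snd p).

Lemma Dn_pos p : 0 < Dn p.
Proof. unfold Dn. pose proof (onorm2_ge0 (fst p)); pose proof (onorm2_ge0 (snd p)); lra. Qed.

Lemma gmet_rep0 p Y Z :
  gmet p Y Z = (g0 Y Z + Bf2 Y Z p p / 2) / (Dn p)^2.
Proof.
  destruct p as [u v]; destruct Y as [y1 y2]; destruct Z as [z1 z2].
  pose proof (Dn_pos (u,v)) as HD. unfold Dn in HD; cbn [fst snd] in HD.
  unfold gmet, ds2, o2add, o2sub, Dn, Bf2, g0; cbn [fst snd].
  pose proof (L1 y1 z1) as E1. pose proof (L1 y2 z2) as E2.
  pose proof (L2 (omul u (oconj v)) y1 y2 z1 z2) as E3.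
  rewrite L3.
  unfold onorm2 in *.
  replace (oinner (oadd y1 z1) (oadd y1 z1)) with (oinner (osub y1 z1) (osub y1 z1) + 4 * oinner y1 z1) by lra.
  replace (oinner (oadd y2 z2) (oadd y2 z2)) with (oinner (osub y2 z2) (osub y2 z2) + 4 * oinner y2 z2) by lra.
  replace (ore (omul (omul u (oconj v)) (omul (oadd y2 z2) (oconj (oadd y1 z1))))) with
    (ore (omul (omul u (oconj v)) (omul (osub y2 z2) (oconj (osub y1 z1)))) +
     2 * ore (omul (omul u (oconj v)) (Kof (y1, y2) (z1, z2)))) by lra.
  field. lra.
Qed.

Lemma gmet_rep2 X W Y Z s t : gmet (o2add (o2scal s X) (o2scal t W)) Y Z =
 (g0 Y Z + Bf2 Y Z X X / 2 * s^2 + Bf2 Y Z X W * s * t + Bf2 Y Z W W / 2 * t^2)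
   / (1 + g0 X X * s^2 + 2 * g0 X W * s * t + g0 W W * t^2)^2.
Proof.
  rewrite gmet_rep0.
  destruct X as [x1 x2]; destruct W as [w1 w2].
  unfold Dn, Bf2, g0, onorm2, o2add, o2scal; cbn [fst snd].
  rewrite !L3, !L4, !L6, (L5 w1 x1), (L5 w2 x2).
  match goal with |- ?a / ?b = ?c / ?d => replace b with d by ring; replace a with c by field end; reflexivity.
Qed.

Lemma gmet_rep1 X Y Z t : gmet (o2scal t X) Y Z =
 (g0 Y Z + Bf2 Y Z X X / 2 * t^2) / (1 + g0 X X * t^2)^2.
Proof.
  rewrite gmet_rep0.
  destruct X as [x1 x2].
  unfold Dn, Bf2, g0, onorm2, o2scal; cbn [fst snd].
  rewrite !L3, !L4', !L6'.
  match goal with |- ?a / ?b = ?c / ?d => replace b with d by ring; replace a with c by field end; reflexivity.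
Qed.

Lemma D2_gmet X W Y Z :
  D2 (fun p => gmet p Y Z) X W = Bf2 Y Z X W - 4 * g0 Y Z * g0 X W.
Proof.
  unfold D2.
  transitivity (Derive (fun s => Derive (fun t =>
     (g0 Y Z + Bf2 Y Z X X / 2 * s^2 + Bf2 Y Z X W * s * t + Bf2 Y Z W W / 2 * t^2)
   / (1 + g0 X X * s^2 + 2 * g0 X W * s * t + g0 W W * t^2)^2) 0) 0).
  { apply Derive_ext; intro s; apply Derive_ext; intro t; apply gmet_rep2. }
  pose proof (rat_D2 (g0 Y Z) (Bf2 Y Z X X / 2) (Bf2 Y Z X W) (Bf2 Y Z W W / 2)
                (g0 X X) (g0 X W) (g0 W W)) as H.
  assert (Hal : 0 <= g0 X X).
  { unfold g0. pose proof (onorm2_ge0 (fst X)); pose proof (onorm2_ge0 (snd X)).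
    unfold onorm2 in *; lra. }
  specialize (H Hal).
  rewrite <- H.
  apply Derive_ext; intro s; apply Derive_ext; intro t.
  match goal with |- ?a / ?b = ?c / ?d => replace b with d by ring; replace a with c by field end; reflexivity.
Qed.

Lemma part1 X Y Z : is_derive (fun t => gmet (o2scal t X) Y Z) 0 0.
Proof.
  apply (is_derive_ext (fun t => (g0 Y Z + Bf2 Y Z X X / 2 * t^2) / (1 + g0 X X * t^2)^2)).
  { intro t; symmetry; apply gmet_rep1. }
  auto_derive.
  - intro H0. simpl in H0. nra.
  - simpl. field.
Qed.

Theorem corollary5p4 :
  (* first derivatives of the metric vanish at P0 in the chart (u,v), so the
     paper's curvature convention applies in these coordinates *)
  (forall X Y Z : O2, is_derive (fun t => gmet (o2scal t X) Y Z) 0 0) /\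
  (forall a b c d e f g h : oct,
     curvR (a, b) (c, d) (e, f) (g, h) =
       4 * oinner a e * oinner c g - 4 * oinner c e * oinner a g
     + 4 * oinner b f * oinner d h - 4 * oinner d f * oinner b h
     - oinner (omul e (oconj d)) (omul g (oconj b))
     + oinner (omul e (oconj b)) (omul g (oconj d))
     - oinner (omul c (oconj f)) (omul a (oconj h))
     + oinner (omul a (oconj f)) (omul c (oconj h))
     - oinner (osub (omul a (oconj d)) (omul c (oconj b)))
              (osub (omul g (oconj f)) (omul e (oconj h)))).
Proof.
  split; [exact part1 |].
  intros a b c d e f g h.
  unfold curvR; rewrite !D2_gmet.
  unfold Bf2, g0, Kof; cbn [fst snd].
  rewrite !L3, !L3r, L7.
  pose proof (I1 c b e h). pose proof (I1 a d g f).
  pose proof (I1 a d e h). pose proof (I1 c b g f).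
  pose proof (I2 a c f h). pose proof (I2 g e d b).
  pose proof (L5 (omul a (oconj f)) (omul c (oconj h))).
  lra.
Qed.
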